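(* Let $gl_n(\mathbb{C})$ be the Lie algebra of all $n\times n$ complex matrices with bracket $[x,y]=xy-yx$. A map $f:gl_n(\mathbb{C})\times gl_n(\mathbb{C})\to gl_n(\mathbb{C})$ is a biderivation of $gl_n(\mathbb{C})$ if and only if there are complex numbers $\lambda,\mu$ such that $f(x,y)=\mu\,\mathrm{tr}(x)\,\mathrm{tr}(y)\,I_n+\lambda[x,y]$ for all $x,y\in gl_n(\mathbb{C})$.
   Context: A biderivation of a Lie algebra $L$ is a bilinear map $f:L\times L\to L$ such that $f([x,y],z)=[x,f(y,z)]+[f(x,z),y]$ and $f(x,[y,z])=[f(x,y),z]+[y,f(x,z)]$ for all $x,y,z\in L$. $I_n$ is the identity matrix and $\mathrm{tr}$ the trace. *)

(* Defs.v *)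
From mathcomp Require Import all_boot all_algebra.
From mathcomp Require Import complex.
From mathcomp Require Import Rstruct.
Set Implicit Arguments. Unset Strict Implicit. Unset Printing Implicit Defensive.
Import GRing.Theory Num.Theory.
Local Open Scope ring_scope.

Definition CC : numClosedFieldType := Rdefinitions.R[i].

Definition lie_br (K : comRingType) (n : nat) (x y : 'M[K]_n) : 'M[K]_n :=
  x *m y - y *m x.

Definition bilinear_map (K : comRingType) (n : nat)
  (f : 'M[K]_n -> 'M[K]_n -> 'M[K]_n) : Prop :=
  (forall (a : K) x x' y, f (a *: x + x') y = a *: f x y + f x' y) /\
  (forall (a : K) x y y', f x (a *: y + y') = a *: f x y + f x y').

Definition biderivation (K : comRingType) (n : nat)
  (f : 'M[K]_n -> 'M[K]_n -> 'M[K]_n) : Prop :=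
  bilinear_map f /\
  (forall x y z, f (lie_br x y) z = lie_br x (f y z) + lie_br (f x z) y) /\
  (forall x y z, f x (lie_br y z) = lie_br (f x y) z + lie_br y (f x z)).

(* Main.v *)
Require Import Defs.
From mathcomp Require Import all_boot all_algebra.
From mathcomp Require Import complex.
From mathcomp Require Import Rstruct.
From mathcomp Require Import ring.
Set Implicit Arguments. Unset Strict Implicit. Unset Printing Implicit Defensive.
Import GRing.Theory Num.Theory.
Local Open Scope ring_scope.

Section Basics.
Variable K : numFieldType.
Variable n : nat.
Local Notation N := n.+1.
Local Notation M := 'M[K]_N.
Local Notation E := (@delta_mx K N N).

Lemma subE (A B : M) r s : (A - B) r s = A r s - B r s.
Proof. by rewrite !mxE. Qed.
Lemma addE (A B : M) r s : (A + B) r s = A r s + B r s.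
Proof. by rewrite !mxE. Qed.
Lemma sclE a (A : M) r s : (a *: A) r s = a * A r s.
Proof. by rewrite !mxE. Qed.
Lemma scE a r s : (a%:M : M) r s = a * (r == s)%:R.
Proof. by rewrite !mxE mulr_natr. Qed.
Lemma oppE (A : M) r s : (- A) r s = - A r s.
Proof. by rewrite !mxE. Qed.
Lemma zE r s : (0 : M) r s = 0.
Proof. by rewrite !mxE. Qed.
Lemma dE i j r s : E i j r s = ((r == i) && (s == j))%:R.
Proof. by rewrite !mxE. Qed.

Lemma mulEl i j (m : M) r s : (E i j *m m) r s = (r == i)%:R * m j s.
Proof.
rewrite !mxE (bigD1 j) //= big1 ?addr0; last first.
  by move=> k /negPf kj; rewrite !mxE kj andbF mul0r.
by rewrite !mxE eqxx andbT.
Qed.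

Lemma mulEr i j (m : M) r s : (m *m E i j) r s = m r i * (j == s)%:R.
Proof.
rewrite !mxE (bigD1 i) //= big1 ?addr0; last first.
  by move=> k /negPf kj; rewrite !mxE kj /= mulr0.
by rewrite !mxE eqxx /= eq_sym.
Qed.

Lemma brEl i j (m : M) r s :
  lie_br (E i j) m r s = (r == i)%:R * m j s - m r i * (j == s)%:R.
Proof. by rewrite /lie_br subE mulEl mulEr. Qed.

Lemma brEr i j (m : M) r s :
  lie_br m (E i j) r s = m r i * (j == s)%:R - (r == i)%:R * m j s.
Proof. by rewrite /lie_br subE mulEl mulEr. Qed.


Ltac simp_eq := repeat (match goal with
 | H : is_true (?a != ?a) |- _ => by rewrite eqxx in H
 | H : is_true (?a != ?b) |- context [?a == ?b] => rewrite (negbTE H)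
 | H : is_true (?a != ?b) |- context [?b == ?a] => rewrite [b == a]eq_sym (negbTE H)
 | |- context [?a == ?a] => rewrite eqxx
 end); rewrite /= ?andbT ?andbF ?andTb ?andFb /= ?mulr0n ?mulr1n ?mulr0 ?mul0r ?mulr1 ?mul1r ?addr0 ?add0r ?subr0 ?sub0r ?oppr0.

Ltac case_all := repeat match goal with
 | |- context [(?a == ?b)] =>
     first [is_var a | is_var b];
       case: (eqVneq a b) => [?|?]; [subst; simp_eq|simp_eq]
 end.

Ltac ent := rewrite ?(zE, subE, addE, oppE, sclE, scE, mulEl, mulEr, dE) ?mxE.

Ltac lc := match goal with
 | |- (0 = ?X) -> (?Y = 0) => let h := fresh "h" in intro h;
     first [ ring | (transitivity (Y - X); [by rewrite -h subr0 | ring])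
           | (transitivity (Y + X); [by rewrite -h addr0 | ring]) ]
 | |- _ => ring
 end.

Definition lin (V : lmodType K) (g : M -> V) :=
  forall a x x', g (a *: x + x') = a *: g x + g x'.
Definition der (D : M -> M) :=
  forall x y, D (lie_br x y) = lie_br x (D y) + lie_br (D x) y.

Section Lin.
Variable V : lmodType K.
Variable g : M -> V.
Hypothesis hg : lin g.
Lemma lin0 : g 0 = 0.
Proof.
have := hg 1 0 0; rewrite !scale1r addr0 => /eqP.
by rewrite -{1}[g 0]add0r (inj_eq (addIr _)) eq_sym => /eqP.
Qed.
Lemma linD x y : g (x + y) = g x + g y.
Proof. by have := hg 1 x y; rewrite !scale1r. Qed.
Lemma linZ a x : g (a *: x) = a *: g x.
Proof. by rewrite -[a *: x]addr0 hg lin0 addr0. Qed.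
Lemma linN x : g (- x) = - g x.
Proof. by rewrite -[- x]scaleN1r linZ scaleN1r. Qed.
Lemma linB x y : g (x - y) = g x - g y.
Proof. by rewrite linD linN. Qed.
Lemma lin_sum I r (P : pred I) (F : I -> M) :
  g (\sum_(i <- r | P i) F i) = \sum_(i <- r | P i) g (F i).
Proof. exact: (big_morph g linD lin0). Qed.
Lemma lin_expand x : g x = \sum_i \sum_j x i j *: g (E i j).
Proof.
rewrite {1}(matrix_sum_delta x) lin_sum; apply: eq_bigr => i _.
by rewrite lin_sum; apply: eq_bigr => j _; rewrite linZ.
Qed.
Lemma lin_eq0 : (forall i j, g (E i j) = 0) -> forall x, g x = 0.
Proof.
move=> h x; rewrite lin_expand big1 // => i _; rewrite big1 // => j _.
by rewrite h scaler0.
Qed.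
End Lin.

Lemma lin_sub (g h : M -> M) : lin g -> lin h -> lin (fun x => g x - h x).
Proof.
move=> hg hh a x x'; rewrite hg hh.
by apply/matrixP => r s; rewrite !(subE, addE, sclE); ring.
Qed.

Lemma jacobi (x y z : M) :
  lie_br (lie_br x y) z = lie_br x (lie_br y z) + lie_br (lie_br x z) y.
Proof.
rewrite /lie_br !mulmxBl !mulmxBr !mulmxA.
move: (x *m y *m z) (y *m x *m z) (z *m x *m y) (z *m y *m x) (x *m z *m y) (y *m z *m x) => a b c d e f.
by apply/matrixP => r s; rewrite !mxE; ring.
Qed.

Lemma brE_lin_l y : lin (fun x : M => lie_br x y).
Proof.
move=> a x x'; rewrite /lie_br mulmxDl mulmxDr -scalemxAl -scalemxAr.
apply/matrixP => r s; rewrite !(subE, addE, sclE); ring.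
Qed.
Lemma brE_lin_r y : lin (fun x : M => lie_br y x).
Proof.
move=> a x x'; rewrite /lie_br mulmxDl mulmxDr -scalemxAl -scalemxAr.
apply/matrixP => r s; rewrite !(subE, addE, sclE); ring.
Qed.

Lemma brBr (x a b : M) : lie_br x (a - b) = lie_br x a - lie_br x b.
Proof. exact: (linB (brE_lin_r x)). Qed.
Lemma brBl (x a b : M) : lie_br (a - b) x = lie_br a x - lie_br b x.
Proof. exact: (linB (brE_lin_l x)). Qed.
Lemma brDr (x a b : M) : lie_br x (a + b) = lie_br x a + lie_br x b.
Proof. exact: (linD (brE_lin_r x)). Qed.
Lemma brDl (x a b : M) : lie_br (a + b) x = lie_br a x + lie_br b x.
Proof. exact: (linD (brE_lin_l x)). Qed.
Lemma brZr (x : M) (a : K) (b : M) : lie_br x (a *: b) = a *: lie_br x b.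
Proof. exact: (linZ (brE_lin_r x)). Qed.
Lemma brZl (x : M) (a : K) (b : M) : lie_br (a *: b) x = a *: lie_br b x.
Proof. exact: (linZ (brE_lin_l x)). Qed.

Lemma br_anti (x y : M) : lie_br x y = - lie_br y x.
Proof. by rewrite /lie_br opprB. Qed.

Lemma der_ad c : der (fun x => lie_br c x).
Proof.
move=> x y; have h := jacobi c x y.
rewrite [lie_br (lie_br c y) x]br_anti in h.
by rewrite h addrC subrK.
Qed.

Lemma two_eq0 (m : K) : m + m = 0 -> m = 0.
Proof. by move/eqP; rewrite -mulr2n mulrn_eq0 /= => /eqP. Qed.

Section DL.
Variable D : M -> M.
Hypothesis lD : lin D.
Hypothesis dD : der D.

Definition cD : M := \matrix_(p, q) (if p == q then 0 else D (E q q) p q).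

Lemma step1 i p q : p != q -> (D (E i i) - lie_br cD (E i i)) p q = 0.
Proof.
move=> npq.
have h0 : lie_br (E i i) (E q q) = 0.
  by apply/matrixP => r s; rewrite brEl !dE mxE; case_all; lc.
have := dD (E i i) (E q q); rewrite h0 lin0 // => /(congr1 (fun m : M => m p q)).
ent.
by case_all; lc.
Qed.
End DL.

Section DL2.
Variable D1 : M -> M.
Hypothesis lD1 : lin D1.
Hypothesis dD1 : der D1.
Hypothesis diag1 : forall i p q, p != q -> D1 (E i i) p q = 0.

Definition tt p q := D1 (E p q) p q.
Definition sg q := D1 (E q q) q q.

Lemma s2a p q : p != q -> forall r s, D1 (E p q) r s = tt p q * ((r == p) && (s == q))%:R.
Proof.
move=> npq r s.
have e1 : lie_br (E p p) (E p q) = E p q by apply/matrixP=> a b; ent; case_all; lc.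
have e2 : lie_br (E p q) (E q q) = E p q by apply/matrixP=> a b; ent; case_all; lc.
have h1 := congr1 (fun m : M => m r s) (dD1 (E p p) (E p q)).
have h2 := congr1 (fun m : M => m p s) (dD1 (E p q) (E q q)).
rewrite e1 /= in h1; rewrite e2 /= in h2.
move: h1 h2; ent; rewrite /tt.
case: (eqVneq r p) => [->|nrp].
  case: (eqVneq s q) => [->|nsq]; simp_eq => // _.
  by rewrite diag1 1?eq_sym // => ->; ring.
rewrite diag1 //; simp_eq.
case: (eqVneq s p) => [->|nsp]; simp_eq => // h1 _.
by apply: two_eq0; rewrite [X in X + _]h1; ring.
Qed.

Lemma s2b q r s : D1 (E q q) r s = sg q * (r == s)%:R.
Proof.
rewrite /sg; case: (eqVneq r s) => [<-|nrs]; simp_eq; last by rewrite diag1.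
case: (eqVneq r q) => [->//|nrq].
have e2 : lie_br (E r q) (E q q) = E r q by apply/matrixP=> a b; ent; case_all; lc.
have h2 := congr1 (fun m : M => m r q) (dD1 (E r q) (E q q)).
rewrite e2 /= in h2; move: h2; ent; simp_eq => h.
move/(congr1 (fun z => z - D1 (E r q) r q)): h; rewrite subrr addrK.
by move/eqP; rewrite eq_sym subr_eq0 => /eqP ->.
Qed.

Lemma s3a p q : p != q -> tt p q + tt q p = 0.
Proof.
move=> npq.
have e : lie_br (E p q) (E q p) = E p p - E q q by apply/matrixP=> a b; ent; case_all; lc.
have hP := congr1 (fun m : M => m p p) (dD1 (E p q) (E q p)).
have hQ := congr1 (fun m : M => m q q) (dD1 (E p q) (E q p)).
rewrite e (linB lD1) /= in hP hQ.
have nqp : q != p by rewrite eq_sym.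
move: hP hQ; ent; rewrite !s2b !(s2a npq) !(s2a nqp).
simp_eq => hP hQ.
apply: two_eq0; rewrite [X in X + _](_ : _ = sg p - sg q); first by rewrite hQ; ring.
by rewrite hP; ring.
Qed.

Lemma s3b p q r : p != q -> q != r -> p != r -> tt p r = tt p q + tt q r.
Proof.
move=> npq nqr npr.
have e : lie_br (E p q) (E q r) = E p r by apply/matrixP=> a b; ent; case_all; lc.
have h := congr1 (fun m : M => m p r) (dD1 (E p q) (E q r)).
rewrite e /= in h; move: h; ent; rewrite !(s2a npq) !(s2a nqr) !(s2a npr).
by simp_eq => ->; rewrite /tt; ring.
Qed.

Definition dvec (p : 'I_N) := if p == ord0 then 0 else tt p ord0.

Lemma s3c p q : p != q -> tt p q = dvec p - dvec q.
Proof.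
move=> npq; rewrite /dvec.
case: (eqVneq p ord0) => [ep|np0].
  subst p; rewrite eq_sym (negbTE npq) sub0r.
  by apply/eqP; rewrite -subr_eq0 opprK addrC s3a // eq_sym.
case: (eqVneq q ord0) => [eq0|nq0]; first by subst q; rewrite subr0.
rewrite (s3b np0 (_ : ord0 != q) npq); last by rewrite eq_sym.

by have := s3a nq0; move/eqP; rewrite addrC addr_eq0 => /eqP ->.
Qed.

Definition dm : M := \matrix_(p, q) (if p == q then dvec p else 0).

Lemma s4 p q : D1 (E p q) - lie_br dm (E p q) =
  ((D1 (E p q) - lie_br dm (E p q)) ord0 ord0)%:M.
Proof.
apply/matrixP => r s; ent.
case: (eqVneq p q) => [<-|npq].
  by rewrite !s2b; case_all; lc.
by rewrite !(s2a npq) (s3c npq); case_all; lc.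
Qed.
End DL2.

Lemma lin_scalar (g : M -> M) : lin g ->
  (forall p q, g (E p q) = (g (E p q) ord0 ord0)%:M) ->
  forall x, g x = (g x ord0 ord0)%:M.
Proof.
move=> hg hE x; apply/eqP; rewrite -subr_eq0; apply/eqP.
have hl : lin (fun x => g x - (g x ord0 ord0)%:M).
  apply: lin_sub => // a y y'; rewrite hg.
  by apply/matrixP => r s; ent; ring.
apply: (lin_eq0 hl) => p q; by rewrite -hE subrr.
Qed.

Lemma der_sub D c : der D -> der (fun x => D x - lie_br c x).
Proof.
move=> dD x y /=; rewrite dD; have /= -> := der_ad c x y.
rewrite (brBr x (D y)) (brBl y (D x)).
by rewrite opprD addrACA.
Qed.

Lemma DL D : lin D -> der D -> exists A, forall x, exists s, D x = lie_br A x + s%:M.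
Proof.
move=> lD dD.
set D1 := fun x => D x - lie_br (cD D) x.
have lD1 : lin D1 by apply: lin_sub => //; apply: brE_lin_r.
have dD1 : der D1 by apply: der_sub.
have diag1 : forall i p q, p != q -> D1 (E i i) p q = 0 by move=> i p q; apply: step1.
exists (cD D + dm D1) => x.
set D2 := fun x => D1 x - lie_br (dm D1) x.
have lD2 : lin D2 by apply: lin_sub => //; apply: brE_lin_r.
have hs := lin_scalar lD2 (s4 lD1 dD1 diag1) x.
exists (D2 x ord0 ord0); rewrite -hs /D2 /D1 brDl.
move: (D x) (lie_br (cD D) x) (lie_br (dm _) x) => u v w.
by apply/matrixP => r s; ent; ring.
Qed.

Lemma trbr (x y : M) : \tr (lie_br x y) = 0.
Proof. by rewrite /lie_br raddfB /= mxtrace_mulC subrr. Qed.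

Lemma Nnz : (N%:R : K) != 0.
Proof. by rewrite pnatr_eq0. Qed.

Lemma br_scalar_l a (x : M) : lie_br a%:M x = 0.
Proof. by rewrite /lie_br scalar_mxC subrr. Qed.
Lemma br_scalar_r a (x : M) : lie_br x a%:M = 0.
Proof. by rewrite /lie_br scalar_mxC subrr. Qed.

Lemma supp (A : M) k l : (0 < n)%N ->
  (forall i j p q, p != k -> q != l -> lie_br A (E i j) p q = 0) ->
  exists b, forall x, lie_br A x = b *: lie_br (E k l) x.
Proof.
move=> n0 h.
have [k' nk'] : exists k' : 'I_N, k' != k.
  case: (eqVneq k ord0) => [->|nk0]; last by exists ord0; rewrite eq_sym.
  by exists ord_max; rewrite -val_eqE /= -lt0n.
have [l' nl'] : exists l' : 'I_N, l' != l.
  case: (eqVneq l ord0) => [->|nl0]; last by exists ord0; rewrite eq_sym.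
  by exists ord_max; rewrite -val_eqE /= -lt0n.
have hi : forall p q, p != q -> p != k -> A p q = 0.
  move=> p q npq npk; have := h q l' p l' npk nl'; by ent; simp_eq.
have hii : forall q, q != k -> q != l -> A k q = 0.
  move=> q nqk nql; have := h k' k k' q nk' nql; ent; simp_eq.
  by move/eqP; rewrite oppr_eq0 => /eqP.
have hiii : forall p q, p != k -> q != l -> A p p = A q q.
  move=> p q npk nql; have := h p q p q npk nql; ent; simp_eq.
  by move/eqP; rewrite subr_eq0 => /eqP.
pose al := A k' k'; pose b := A k l - (k == l)%:R * al.
have eA : A = al%:M + b *: E k l.
  apply/matrixP => p q; ent; rewrite /b /al.
  case: (eqVneq p q) => [<-|npq].
    case: (eqVneq p k) => [->|npk].
      case: (eqVneq k l) => [<-|nkl]; simp_eq; first by ring.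
      by rewrite (hiii k' k).
    simp_eq; rewrite (hiii p l') // (hiii k' l') //.
  simp_eq; case: (eqVneq p k) => [ep|npk]; simp_eq; last by rewrite hi.
  subst p; case: (eqVneq q l) => [eq|nql]; simp_eq.
    by subst q; rewrite (negbTE npq); simp_eq.
  by rewrite hii // eq_sym.
by exists b => x; rewrite eA brDl brZl br_scalar_l add0r.
Qed.

Lemma lin_trs (g : M -> M) : lin g -> lin (fun x => ((\tr (g x) / N%:R)%:M : M)).
Proof.
move=> hg a x x'; rewrite hg mxtraceD mxtraceZ.
by apply/matrixP => r s; ent; ring.
Qed.

Lemma lin_scale c (g : M -> M) : lin g -> lin (fun x => c *: g x).
Proof.
move=> hg a x x'; rewrite hg.
move: (g x) (g x') => u v.
by apply/matrixP => r s; ent; ring.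
Qed.

Lemma lin_trC (C : M) : lin (fun x => \tr x *: C).
Proof. by move=> a x x'; rewrite mxtraceD mxtraceZ scalerDl scalerA. Qed.

Lemma trE i j : \tr (E i j) = (i == j)%:R.
Proof.
rewrite /mxtrace (bigD1 i) //= big1 ?addr0; first by rewrite dE eqxx.
by move=> k /negPf nki; rewrite dE nki.
Qed.

Lemma Edec i j : E i j = lie_br (E i ord0) (E ord0 j) + (i == j)%:R *: E ord0 ord0.
Proof. by apply/matrixP => r s; ent; case_all; lc. Qed.

Section Bider.
Variable f : M -> M -> M.
Hypothesis hf : biderivation f.

Lemma lf1 y : lin (fun x => f x y).
Proof. by case: hf => [[h1 _] _] a x x'; rewrite h1. Qed.
Lemma lf2 x : lin (f x).
Proof. by case: hf => [[_ h2] _] a y y'; rewrite h2. Qed.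
Lemma df1 y : der (fun x => f x y).
Proof. by case: hf => [_ [h1 _]] x x'; rewrite h1. Qed.
Lemma df2 x : der (f x).
Proof. by case: hf => [_ [_ h2]] y y'; rewrite h2 addrC. Qed.

Definition Tf x y := \tr (f x y) / N%:R.
Definition G x y := f x y - (Tf x y)%:M.

Lemma Tf_eq A s x y : f x y = lie_br A x + s%:M -> Tf x y = s.
Proof.
move=> e; rewrite /Tf e mxtraceD trbr add0r mxtrace_scalar -[s *+ N]mulr_natr.
by rewrite mulfK // Nnz.
Qed.
Lemma Tf_eq' A s x y : f x y = lie_br A y + s%:M -> Tf x y = s.
Proof.
move=> e; rewrite /Tf e mxtraceD trbr add0r mxtrace_scalar -[s *+ N]mulr_natr.
by rewrite mulfK // Nnz.
Qed.

Lemma G_in1 y : exists A, forall x, G x y = lie_br A x.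
Proof.
have [A hA] := DL (lf1 y) (df1 y); exists A => x.
have [s hs] := hA x; rewrite /G (Tf_eq hs) hs.
by rewrite addrK.
Qed.
Lemma G_in2 x : exists B, forall y, G x y = lie_br B y.
Proof.
have [B hB] := DL (lf2 x) (df2 x); exists B => y.
have [s hs] := hB y; rewrite /G (Tf_eq' hs) hs.
by rewrite addrK.
Qed.

Lemma Tf_br1 a b y : Tf (lie_br a b) y = 0.
Proof. by rewrite /Tf; have /= -> := df1 y a b; rewrite mxtraceD !trbr addr0 mul0r. Qed.
Lemma Tf_br2 x a b : Tf x (lie_br a b) = 0.
Proof. by rewrite /Tf; have /= -> := df2 x a b; rewrite mxtraceD !trbr addr0 mul0r. Qed.

Lemma S1 x y : ((Tf x y)%:M : M) = \tr x *: (Tf (E ord0 ord0) y)%:M.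
Proof.
apply/eqP; rewrite -subr_eq0; apply/eqP; move: x.
have hl : lin (fun x => ((Tf x y)%:M : M) - \tr x *: (Tf (E ord0 ord0) y)%:M).
  by apply: lin_sub; [apply: lin_trs; apply: lf1 | apply: lin_trC].
apply: (lin_eq0 hl) => i j /=.
have hT : lin (fun x => ((Tf x y)%:M : M)) by apply: lin_trs; apply: lf1.
rewrite (Edec i j) (linD hT) (linZ hT) /= Tf_br1 raddf0 add0r.
by rewrite mxtraceD trbr add0r mxtraceZ trE eqxx mulr1 subrr.
Qed.

Lemma S2 x y : ((Tf x y)%:M : M) = \tr y *: (Tf x (E ord0 ord0))%:M.
Proof.
apply/eqP; rewrite -subr_eq0; apply/eqP; move: y.
have hl : lin (fun y => ((Tf x y)%:M : M) - \tr y *: (Tf x (E ord0 ord0))%:M).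
  by apply: lin_sub; [apply: lin_trs; apply: lf2 | apply: lin_trC].
apply: (lin_eq0 hl) => i j /=.
have hT : lin (fun y => ((Tf x y)%:M : M)) by apply: lin_trs; apply: lf2.
rewrite (Edec i j) (linD hT) (linZ hT) /= Tf_br2 raddf0 add0r.
by rewrite mxtraceD trbr add0r mxtraceZ trE eqxx mulr1 subrr.
Qed.

Lemma Tf_form x y : ((Tf x y)%:M : M) =
  (Tf (E ord0 ord0) (E ord0 ord0) * \tr x * \tr y)%:M.
Proof.
rewrite S1 S2 !scale_scalar_mx; congr (_%:M); ring.
Qed.

Hypothesis n0 : (0 < n)%N.

Lemma G_beta k l : exists b, forall x, G x (E k l) = b *: lie_br (E k l) x.
Proof.
have [A hA] := G_in1 (E k l).
have [b hb] : exists b, forall x, lie_br A x = b *: lie_br (E k l) x.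
  apply: supp => // i j p q npk nql; rewrite -hA.
  have [B hB] := G_in2 (E i j); rewrite hB; ent; by simp_eq.
by exists b => x; rewrite hA hb.
Qed.

Lemma G_gamma i j : exists c, forall y, G (E i j) y = c *: lie_br (E i j) y.
Proof.
have [B hB] := G_in2 (E i j).
have [c hc] : exists c, forall y, lie_br B y = c *: lie_br (E i j) y.
  apply: supp => // k l p q npi nqj; rewrite -hB.
  have [A hA] := G_in1 (E k l); rewrite hA; ent; by simp_eq.
by exists c => y; rewrite hB hc.
Qed.

Lemma G_lam : exists lam, forall x y, G x y = lam *: lie_br x y.
Proof.
have [bt hbt] := fin_all_exists (fun kl : 'I_N * 'I_N => G_beta kl.1 kl.2).
have [gm hgm] := fin_all_exists (fun ij : 'I_N * 'I_N => G_gamma ij.1 ij.2).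
have REL0 : forall i j k l p q,
    (bt (k, l) + gm (i, j)) * lie_br (E i j) (E k l) p q = 0.
  move=> i j k l p q.
  have e1 := hbt (k, l) (E i j); have e2 := hgm (i, j) (E k l).
  rewrite /= in e1 e2; rewrite e1 br_anti scalerN in e2.
  have := congr1 (fun m : M => m p q) e2; rewrite oppE !sclE => h.
  by rewrite mulrDl -h addrN.
have REL : forall k i j l, ~~ ((j == k) && (k == i)) -> ~~ ((i == j) && (j == l)) ->
    bt (k, i) = bt (j, l).
  move=> k i j l c1 c2.
  have ha := REL0 i j j l i l.
  have hb := REL0 i j k i k j.
  move: ha hb; ent; simp_eq.
  have z1 : (i == j)%:R * ((l == i) && (l == j))%:R = 0 :> K by move: c2; case_all.
  have z2 : (k == i)%:R * ((j == k) && (j == i))%:R = 0 :> K by move: c1; case_all.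
  rewrite z1 z2 subr0 sub0r mulr1 mulrN1 => /eqP ha /eqP hb.
  move: ha hb; rewrite oppr_eq0 !addr_eq0 => /eqP -> /eqP ->. done.
have now : (ord0 : 'I_N) != ord_max by rewrite -val_eqE /= eq_sym -lt0n.
have hall : forall k l, bt (k, l) = bt (ord0, ord_max).
  move=> k l; case: (eqVneq k ord0) => [->|nk].
    case: (eqVneq l ord0) => [->|nl].
      rewrite (REL ord0 ord0 ord_max ord_max); [|by simp_eq|by simp_eq].
      by rewrite (REL ord_max ord_max ord0 ord_max); [|by simp_eq|by simp_eq].
    by rewrite (REL ord0 l ord0 ord_max); [|by simp_eq|by simp_eq].
  by rewrite (REL k l ord0 ord_max); [|by simp_eq|by simp_eq].
exists (- bt (ord0, ord_max)) => x.
have hl : lin (fun y => G x y - (- bt (ord0, ord_max)) *: lie_br x y).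
  apply: lin_sub; last by apply: lin_scale; apply: brE_lin_r.
  by apply: lin_sub; [apply: lf2 | apply: lin_trs; apply: lf2].
move=> y; apply/eqP; rewrite -subr_eq0; apply/eqP; move: y.
apply: (lin_eq0 hl) => k l.
have := hbt (k, l) x; rewrite /= => ->; rewrite hall br_anti scaleNr scalerN opprK.
by rewrite addNr.
Qed.
End Bider.

Lemma jacobi2 (x y z : M) :
  lie_br x (lie_br y z) = lie_br (lie_br x y) z + lie_br y (lie_br x z).
Proof.
rewrite /lie_br !mulmxBl !mulmxBr !mulmxA.
move: (x *m y *m z) (y *m x *m z) (z *m x *m y) (z *m y *m x) (x *m z *m y) (y *m z *m x) => a b c d e f.
by apply/matrixP => r s; rewrite !mxE; ring.
Qed.

Lemma sc0 : (0 : K)%:M = 0 :> M.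
Proof. by apply/matrixP => r s; ent; ring. Qed.

Lemma conv lam mu (f : M -> M -> M) :
  (forall x y, f x y = (mu * \tr x * \tr y)%:M + lam *: lie_br x y) ->
  biderivation f.
Proof.
move=> hf; split; [split|split].
- move=> a x x' y; rewrite !hf mxtraceD mxtraceZ brDl brZl.
  move: (lie_br x y) (lie_br x' y) => u v.
  by apply/matrixP => r s; ent; ring.
- move=> a x y y'; rewrite !hf mxtraceD mxtraceZ brDr brZr.
  move: (lie_br x y) (lie_br x y') => u v.
  by apply/matrixP => r s; ent; ring.
- move=> x y z; rewrite !hf trbr mulr0 mul0r (brDr x) (brZr x) (brDl y) (brZl y).
  rewrite br_scalar_r br_scalar_l !add0r jacobi scalerDr.
  by rewrite sc0 add0r.
- move=> x y z; rewrite !hf trbr mulr0 (brDl z) (brZl z) (brDr y) (brZr y).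
  rewrite br_scalar_r br_scalar_l !add0r jacobi2 scalerDr.
  by rewrite sc0 add0r.
Qed.

End Basics.

Theorem gen (K : numFieldType) (n : nat) (f : 'M[K]_n.+1 -> 'M[K]_n.+1 -> 'M[K]_n.+1) :
  biderivation f <->
  exists (lambda mu : K), forall x y : 'M[K]_n.+1,
    f x y = (mu * \tr x * \tr y)%:M + lambda *: lie_br x y.
Proof.
split; last by case=> lam [mu h]; apply: conv h.
move=> hf.
have [lam hl] : exists lam, forall x y, G f x y = lam *: lie_br x y.
  case: (posnP n) => [n0|np]; last exact: G_lam.
  subst n; exists 0 => x y; rewrite scale0r /G /Tf.
  rewrite [f x y]mx11_scalar trace_mx11 mxE eqxx /= divr1.
  by rewrite mulr1n subrr.
exists lam, (Tf f (delta_mx ord0 ord0) (delta_mx ord0 ord0)) => x y.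
rewrite -Tf_form // -hl /G addrC subrK //.
Qed.

Unset Implicit Arguments.
Set Strict Implicit.

Theorem theorem3p2 (n : nat) (f : 'M[CC]_n -> 'M[CC]_n -> 'M[CC]_n) :
  biderivation f <->
  exists (lambda mu : CC), forall x y : 'M[CC]_n,
    f x y = (mu * \tr x * \tr y)%:M + lambda *: lie_br x y.
Proof.
case: n f => [|n] f.
  split=> _.
    by exists 0, 0 => x y; apply/matrixP => -[].
  by split; [split|split] => *; apply/matrixP => -[].
exact: (gen (K := CC) f).
Qed.
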